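(* Let $r\in\mathbb{R}$, $r\neq 0$. Then $\{r^k\}_{k=0}^{\infty}$ is a Legendre multiplier sequence if and only if $|r|=1$.
   Context: The Legendre polynomials $\mathfrak{Le}_n(x)$ are defined by $\frac{1}{\sqrt{1-2xt+t^2}}=\sum_{k=0}^{\infty}\mathfrak{Le}_k(x)t^k$. A real sequence $\{\gamma_k\}_{k=0}^{\infty}$ is a Legendre multiplier sequence if, for every $n$ and all real $a_0,\dots,a_n$, the polynomial $\sum_{k=0}^n a_k\gamma_k\mathfrak{Le}_k(x)$ has only real zeros whenever $\sum_{k=0}^n a_k\mathfrak{Le}_k(x)$ has only real zeros. *)

(* Defs.v *)
From mathcomp Require Import all_boot all_order all_algebra.
From mathcomp Require Import reals.
Set Implicit Arguments. Unset Strict Implicit. Unset Printing Implicit Defensive.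
Import Order.TTheory GRing.Theory Num.Theory.
Local Open Scope ring_scope.

(* Legendre polynomial Le_n: the coefficient of t^n in the expansion of
   (1 - 2 x t + t^2)^(-1/2). *)
Definition legendre (R : realType) (n : nat) : {poly R} :=
  (2%:R ^- n) *: \sum_(k < n./2.+1)
     (((-1) ^+ k * ('C(n, k) * 'C(2 * n - 2 * k, n))%:R) *: 'X^(n - 2 * k)).

(* A real polynomial has only real zeros: it factors into linear factors
   over R, i.e. all its (complex) zeros are real. *)
Definition only_real_zeros (R : realType) (p : {poly R}) : Prop :=
  exists s : seq R, p = lead_coef p *: \prod_(x <- s) ('X - x%:P).

Definition legendre_multiplier_sequence (R : realType) (g : nat -> R) : Prop :=
  forall (n : nat) (a : nat -> R),
    only_real_zeros (\sum_(k < n.+1) a k *: legendre R k) ->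
    only_real_zeros (\sum_(k < n.+1) (a k * g k) *: legendre R k).

(* Main.v *)
Require Import Defs.
From mathcomp Require Import all_boot all_order all_algebra.
From mathcomp Require Import reals.
From mathcomp Require Import ring lra.
Import Order.TTheory GRing.Theory Num.Theory.
Local Open Scope ring_scope.
Set Warnings "-notation-overridden,-ambiguous-paths".

Section Aux.
Variable R : realType.

Definition cubic (c0 c1 c2 c3 : R) : {poly R} :=
  c3 *: 'X^3 + c2 *: 'X^2 + c1 *: 'X + c0%:P.

Lemma coef_cubic c0 c1 c2 c3 i :
  (cubic c0 c1 c2 c3)`_i = [:: c0; c1; c2; c3]`_i.
Proof.
rewrite /cubic !coefE.
by case: i => [|[|[|[|i]]]] /=; rewrite ?mulr0 ?mulr1 ?addr0 ?add0r ?nth_nil.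
Qed.

Lemma cubic_inj a0 a1 a2 a3 b0 b1 b2 b3 :
  cubic a0 a1 a2 a3 = cubic b0 b1 b2 b3 -> [/\ a0 = b0, a1 = b1, a2 = b2 & a3 = b3].
Proof.
move=> E.
have := congr1 (fun p : {poly R} => p`_0) E; have := congr1 (fun p : {poly R} => p`_1) E.
have := congr1 (fun p : {poly R} => p`_2) E; have := congr1 (fun p : {poly R} => p`_3) E.
by rewrite /= !coef_cubic /=.
Qed.

Lemma size_cubic c0 c1 c2 c3 : c3 != 0 -> size (cubic c0 c1 c2 c3) = 4%N.
Proof.
move=> h; apply/eqP; rewrite eqn_leq; apply/andP; split.
  by apply/leq_sizeP => j hj; rewrite coef_cubic; case: j hj => [|[|[|[|j]]]] //= _; rewrite nth_nil.
rewrite ltnNge; apply/negP => /leq_sizeP /(_ 3%N (leqnn _)).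
by rewrite coef_cubic /=; apply/eqP.
Qed.

Lemma scale_cubic c a0 a1 a2 a3 :
  c *: cubic a0 a1 a2 a3 = cubic (c * a0) (c * a1) (c * a2) (c * a3).
Proof.
by apply/polyP => i; rewrite coefZ !coef_cubic; case: i => [|[|[|[|i]]]] //=; rewrite nth_nil mulr0.
Qed.

Lemma prod3 x1 x2 x3 :
  \prod_(x <- [:: x1; x2; x3]) ('X - x%:P) =
  cubic (-(x1 * x2 * x3)) (x1 * x2 + x1 * x3 + x2 * x3) (-(x1 + x2 + x3)) 1.
Proof.
rewrite !big_cons big_nil /cubic -!mul_polyC !rmorphN !rmorphD !rmorphM rmorph1.
ring.
Qed.

Lemma orz_intro (p : {poly R}) c (s : seq R) (F : R -> R) :
  p = c *: \prod_(i <- s) ('X - (F i)%:P) -> only_real_zeros p.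
Proof.
move=> E; exists (map F s); rewrite big_map E lead_coefZ.
by rewrite (monicP (monic_prod_XsubC _ _ _)) mulr1.
Qed.

Lemma leg0 : legendre R 0 = cubic 1 0 0 0.
Proof.
apply/polyP => i; rewrite coef_cubic /legendre !big_ord_recr big_ord0 /= !coefE.
rewrite (_ : ('C(0, 0) * 'C(2 * 0 - 2 * 0, 0))%N = 1%N) //.
by case: i => [|[|[|[|i]]]] /=; rewrite ?nth_nil; field.
Qed.

Lemma leg1 : legendre R 1 = cubic 0 1 0 0.
Proof.
apply/polyP => i; rewrite coef_cubic /legendre !big_ord_recr big_ord0 /= !coefE.
rewrite (_ : ('C(1, 0) * 'C(2 * 1 - 2 * 0, 1))%N = 2%N) //.
by case: i => [|[|[|[|i]]]] /=; rewrite ?nth_nil; field.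
Qed.

Lemma leg2 : legendre R 2 = cubic (-(1/2)) 0 (3/2) 0.
Proof.
apply/polyP => i; rewrite coef_cubic /legendre !big_ord_recr big_ord0 /= !coefE.
rewrite (_ : ('C(2, 0) * 'C(2 * 2 - 2 * 0, 2))%N = 6%N) // (_ : ('C(2, 1) * 'C(2 * 2 - 2 * 1, 2))%N = 2%N) //.
by case: i => [|[|[|[|i]]]] /=; rewrite ?nth_nil; field.
Qed.

Lemma leg3 : legendre R 3 = cubic 0 (-(3/2)) 0 (5/2).
Proof.
apply/polyP => i; rewrite coef_cubic /legendre !big_ord_recr big_ord0 /= !coefE.
rewrite (_ : ('C(3, 0) * 'C(2 * 3 - 2 * 0, 3))%N = 20%N) // (_ : ('C(3, 1) * 'C(2 * 3 - 2 * 1, 3))%N = 12%N) //.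
by case: i => [|[|[|[|i]]]] /=; rewrite ?nth_nil; field.
Qed.

End Aux.

Arguments cubic {R}.

Section Main.
Variable R : realType.

Lemma sum4 (b : nat -> R) :
  \sum_(k < 4) b k *: legendre R k =
  cubic (b 0%N - b 2%N / 2) (b 1%N - 3 / 2 * b 3%N) (3 / 2 * b 2%N) (5 / 2 * b 3%N).
Proof.
rewrite !big_ord_recr big_ord0 /= add0r leg0 leg1 leg2 leg3.
apply/polyP => i; rewrite [in RHS]coef_cubic !coefD !coefZ !coef_cubic.
by case: i => [|[|[|[|i]]]] /=; rewrite ?nth_nil; field.
Qed.

Definition aa (r : R) (k : nat) : R :=
  match k with 0 => - r - r ^+ 3 | 1 => 3 / 5 + 3 * r ^+ 2 | 2 => - 2 * r
  | 3 => 2 / 5 | _ => 0 end.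

Lemma counter (r : R) : r != 0 -> r ^+ 2 != 1 ->
  ~ legendre_multiplier_sequence (fun k => r ^+ k).
Proof.
move=> r0 r1 /(_ 3%N (aa r)) H.
have HP : only_real_zeros (\sum_(k < 4) aa r k *: legendre R k).
  apply: (@orz_intro _ _ 1 [:: r; r; r] id).
  rewrite scale1r prod3 sum4 /aa.
  by congr cubic; field.
move: (H HP); rewrite (sum4 (fun k => aa r k * r ^+ k)) /aa => -[s].
rewrite (_ : cubic _ _ _ _ = cubic (-r) (12/5*r^+3 + 3/5*r) (-3*r^+3) (r^+3)); last first.
  by congr cubic; field.
set q := cubic _ _ _ _ => Hq.
have r3 : r ^+ 3 != 0 by rewrite expf_neq0.
have sq : size q = 4%N by rewrite size_cubic.
have c0 : lead_coef q != 0 by rewrite lead_coef_eq0 -size_poly_eq0 sq.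
have : size s = 3%N.
  by move: sq; rewrite {1}Hq size_scale // size_prod_XsubC => -[].
case: s Hq => [|x1 [|x2 [|x3 [|? ?]]]] //= Hq _.
move: Hq; rewrite prod3 scale_cubic => /cubic_inj [e0 e1 e2 e3].
rewrite mulr1 in e3; move: e0 e1 e2; rewrite -e3 => e0 e1 e2.
have r1' : r != 0 := r0.
have X3 : x3 = 3 - x1 - x2.
  have E : r^+3 * (x1 + x2 + x3 - 3) = 0 by nra.
  move/eqP: E; rewrite mulf_eq0 (negbTE r3) /= subr_eq0 => /eqP {}E; lra.
set s2 := x1 * x2 + x1 * x3 + x2 * x3 in e1.
set s3 := x1 * x2 * x3 in e0.
have E2 : r^+2 * s2 = (12 * r^+2 + 3) / 5.
  have E : r * (5 * (r^+2 * s2) - (12 * r^+2 + 3)) = 0.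
    transitivity (5 * (r^+3 * s2) - 5 * (12/5*r^+3 + 3/5*r)); first by field.
    by rewrite e1 subrr.
  move/eqP: E; rewrite mulf_eq0 (negbTE r0) /= subr_eq0 => /eqP {}E.
  by rewrite -E; field.
have E3 : r^+2 * s3 = 1.
  have E : r * (r^+2 * s3 - 1) = 0.
    transitivity (-(r^+3 * - s3) - r); first by ring.
    by rewrite -e0 opprK subrr.
  by move/eqP: E; rewrite mulf_eq0 (negbTE r0) /= subr_eq0 => /eqP {}E.
pose D := ((x1 - x2) * (x1 - x3) * (x2 - x3)) ^+ 2.
have Dge : 0 <= D by rewrite /D sqr_ge0.
set t := r ^+ 2 in r1 E2 E3.
have ID : t ^+ 3 * D = 9 * t * (t * s2) ^+ 2 - 4 * (t * s2) ^+ 3 - 108 * t ^+ 2 * (t * s3)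
   + 54 * t * (t * s2) * (t * s3) - 27 * t * (t * s3) ^+ 2.
  by rewrite /D /s2 /s3 X3; ring.
rewrite E2 E3 in ID.
have tpos : 0 < t by rewrite /t exprn_even_gt0.
have t1 : 0 < (t - 1) ^+ 2.
  rewrite lt0r sqr_ge0 andbT sqrf_eq0 subr_eq0; exact: r1.
have t3 : 0 <= t ^+ 3 * D by rewrite mulr_ge0 // exprn_ge0 // ltW.
have : t ^+ 3 * D = - (108 / 125) * (t - 1) ^+ 2 * (4 * t + 1).
  by rewrite ID; field.
nra.
Qed.
End Main.

Section Neg.
Variable R : realType.

Lemma comp_sum (I : Type) (s : seq I) (F : I -> {poly R}) (q : {poly R}) :
  (\sum_(i <- s) F i) \Po q = \sum_(i <- s) (F i \Po q).
Proof.
elim: s => [|x s IH]; first by rewrite !big_nil comp_poly0.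
by rewrite !big_cons comp_polyD IH.
Qed.

Lemma leg_neg k : legendre R k \Po (-'X) = (-1) ^+ k *: legendre R k.
Proof.
rewrite /legendre comp_polyZ comp_sum scalerA mulrC -scalerA; congr (_ *: _).
rewrite scaler_sumr; apply: eq_bigr => j _.
rewrite comp_polyZ comp_Xn_poly.
rewrite (_ : - 'X = (-1) *: ('X : {poly R})); last by rewrite scaleN1r.
rewrite exprZn scalerA scalerA; congr (_ *: _).
rewrite [LHS]mulrC; congr (_ * _).
have hj : (2 * j <= k)%N.
  have := ltn_ord j; rewrite ltnS => hj.
  apply: (leq_trans (n := (k./2).*2)); first by rewrite -muln2 mulnC leq_mul2r hj orbT.
  by rewrite halfK leq_subr.
have ho : odd (k - 2 * j)%N = odd k by rewrite oddB // oddM /= addbF.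
by rewrite -signr_odd -ho signr_odd.
Qed.

Lemma prod_neg (s : seq R) :
  (\prod_(x <- s) ('X - x%:P)) \Po (-'X) =
  (-1) ^+ (size s) *: \prod_(x <- s) ('X - (- x)%:P).
Proof.
elim: s => [|x s IH]; first by rewrite !big_nil comp_polyC expr0 scale1r.
rewrite !big_cons comp_polyM IH comp_polyB comp_polyX comp_polyC /= exprS.
rewrite scalerAr (_ : - 'X - x%:P = - ('X - (- x)%:P)); last first.
  by rewrite rmorphN opprB addrC.
by rewrite !mulNr mul1r scaleNr mulrN.
Qed.

End Neg.

Theorem theorem4p11 (R : realType) (r : R) (hr : r != 0) :
  legendre_multiplier_sequence (fun k : nat => r ^+ k) <-> `|r| = 1.
Proof.
split.
  move=> H; case: (boolP (r ^+ 2 == 1)) => [/eqP h2|h2]; last first.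
    by exfalso; exact: (@counter R r hr h2 H).
  have h : `|r| ^+ 2 = 1 by rewrite -normrX h2 normr1.
  have := normr_ge0 r; nra.
move=> hr1.
have [->|->] : r = 1 \/ r = -1.
  case: (lerP 0 r) => h; [left; rewrite -hr1 ger0_norm // | right].
  by rewrite -hr1 ltr0_norm // opprK.
  move=> n a Hp; under eq_bigr => k _ do rewrite expr1n mulr1.
  exact: Hp.
move=> n a [s Hs].
set p := \sum_(k < n.+1) a k *: legendre R k in Hs.
have -> : \sum_(k < n.+1) (a k * (-1) ^+ k) *: legendre R k = p \Po (-'X).
  rewrite /p comp_sum; apply: eq_bigr => k _.
  by rewrite comp_polyZ leg_neg [RHS]scalerA.
refine (@orz_intro R (p \Po -'X) (lead_coef p * (-1) ^+ size s) s (fun x => - x) _).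
by rewrite {1}Hs comp_polyZ prod_neg scalerA.
Qed.
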